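(* Let $H$ be a monoid that is either a group or such that its set of non-units $H\setminus H^\times$ does not form an almost-breakable semigroup. Then $\mathcal{P}_{\mathrm{fin},1}(H)$ is UmF if and only if $H$ is either trivial or isomorphic to the group of integers modulo $2$ under addition.
   Context: For a monoid $H$, $\mathcal{P}_{\mathrm{fin},1}(H)$ denotes the set of all non-empty finite subsets of $H$ containing $1_H$, a monoid under setwise multiplication $XY=\{xy: x\in X, y\in Y\}$. $H^\times$ is the group of units of $H$. Divisibility in a monoid $M$: $x\mid_M y$ iff $y\in MxM$; $x,y$ are associated if each divides the other; proper divisor means divides but not associated. A unit-divisor divides $1_M$; otherwise it is a non-unit-divisor. An irreducible is a non-unit-divisor $a$ with $a\neq xy$ for all non-unit-divisors $x,y$ properly dividing $a$. A factorization of $x$ is a word over the irreducibles whose product is $x$. For words $\mathfrak a,\mathfrak b$, $\mathfrak a\sqsubseteq\mathfrak b$ means $\mathfrak a$ is, up to associatedness of letters, a subword (subsequence) of a permutation of $\mathfrak b$; equivalence means $\sqsubseteq$ both ways. A factorization $\mathfrak a$ of $x$ is minimal if no factorization $\mathfrak b$ of $x$ satisfies $\mathfrak b\sqsubseteq\mathfrak a\not\sqsubseteq\mathfrak b$. $M$ is UmF if every non-unit-divisor is a product of irreducibles and any two minimal factorizations of an element are equivalent. A semigroup $S$ is almost-breakable if for all $x,y\in S$, $xy\in\{x,y\}$ or $yx\in\{x,y\}$. *)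

(* Defs.v *)
From HB Require Import structures.
From mathcomp Require Import all_boot monoid.
From mathcomp Require Import all_algebra.
From mathcomp Require Import finmap.
From Stdlib Require Import Permutation.
From Stdlib Require List.

Set Implicit Arguments.
Unset Strict Implicit.
Unset Printing Implicit Defensive.

Local Open Scope fset_scope.

Section RawMonoid.
Variables (T : Type) (mul : T -> T -> T) (one : T).

Definition mdvd (x y : T) : Prop := exists a b, y = mul (mul a x) b.

Definition massoc (x y : T) : Prop := mdvd x y /\ mdvd y x.

Definition mproper_dvd (x y : T) : Prop := mdvd x y /\ ~ massoc x y.

Definition unit_divisor (x : T) : Prop := mdvd x one.

Definition mirreducible (a : T) : Prop :=
  ~ unit_divisor a /\
  forall x y, ~ unit_divisor x -> ~ unit_divisor y ->
    mproper_dvd x a -> mproper_dvd y a -> a <> mul x y.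

Definition wprod (w : list T) : T := foldr mul one w.

Definition factorization (x : T) (w : list T) : Prop :=
  List.Forall mirreducible w /\ wprod w = x.

Definition subword (a b : list T) : Prop :=
  exists b', Permutation b b' /\ exists m : seq bool, List.Forall2 massoc a (mask m b').

Definition word_equiv (a b : list T) : Prop := subword a b /\ subword b a.

Definition minimal_factorization (x : T) (a : list T) : Prop :=
  factorization x a /\
  ~ (exists b, factorization x b /\ subword b a /\ ~ subword a b).

Definition UmF : Prop :=
  (forall x, ~ unit_divisor x -> exists w, factorization x w) /\
  (forall x a b, minimal_factorization x a -> minimal_factorization x b ->
     word_equiv a b).

End RawMonoid.

Local Open Scope group_scope.

Definition is_unit (H : monoidType) (x : H) : Prop :=
  exists y : H, x * y = 1 /\ y * x = 1.

Definition is_group (H : monoidType) : Prop := forall x : H, is_unit x.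

Definition nonunits_almost_breakable_semigroup (H : monoidType) : Prop :=
  (forall x y : H, ~ is_unit x -> ~ is_unit y -> ~ is_unit (x * y)) /\
  (forall x y : H, ~ is_unit x -> ~ is_unit y ->
     (x * y = x \/ x * y = y) \/ (y * x = x \/ y * x = y)).

Definition trivial_monoid (H : monoidType) : Prop := forall x : H, x = 1.

Definition iso_Z2 (H : monoidType) : Prop :=
  exists f : H -> 'Z_2, bijective f /\ f 1 = 0%R /\
    forall x y : H, f (x * y) = (f x + f y)%R.

Definition Pfin1 (H : monoidType) := {X : {fset H} | 1 \in X}.

Definition setmul (H : monoidType) (X Y : {fset H}) : {fset H} :=
  [fset x * y | x in X, y in Y].

Lemma setmul_one (H : monoidType) (X Y : Pfin1 H) :
  (1 : H) \in setmul (val X) (val Y).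
Proof.
apply/imfset2P; exists 1; first exact: (valP X).
by exists 1; [exact: (valP Y) | rewrite mulg1].
Qed.

Definition Pfin1_mul (H : monoidType) (X Y : Pfin1 H) : Pfin1 H :=
  exist _ (setmul (val X) (val Y)) (setmul_one X Y).

Definition Pfin1_one (H : monoidType) : Pfin1 H :=
  exist _ [fset (1 : H)] (fset11 (1 : H)).

Definition Pfin1_UmF (H : monoidType) : Prop :=
  UmF (@Pfin1_mul H) (Pfin1_one H).

(* Main.v *)
Require Import Defs.
From HB Require Import structures.
From mathcomp Require Import all_boot monoid all_algebra finmap.
From Stdlib Require Import Permutation Classical.
From Stdlib Require List.

Set Implicit Arguments.
Unset Strict Implicit.
Unset Printing Implicit Defensive.
Local Open Scope fset_scope.
Local Open Scope group_scope.


Section Gen.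
Variable H : monoidType.
Local Notation P := (Pfin1 H).
Local Notation pm := (@Pfin1_mul H).
Local Notation po := (Pfin1_one H).

Definition mkS (s : seq H) : {fset H} := seq_fset tt (1 :: s).
Lemma mkS1 s : (1:H) \in mkS s. Proof. by rewrite seq_fsetE mem_head. Qed.
Definition mk s : P := exist _ (mkS s) (mkS1 s).

Lemma mem_mk s z : (z \in val (mk s)) = (z \in 1 :: s).
Proof. by rewrite /= seq_fsetE. Qed.

Lemma memM (X Y : P) z : z \in val (pm X Y) <->
  exists x y, x \in val X /\ y \in val Y /\ z = x * y.
Proof.
split.
- by case/imfset2P => x xX [y yY ->]; exists x, y.
- by case=> x [y [xX [yY ->]]]; apply/imfset2P; exists x => //; exists y.
Qed.

Lemma Peq (X Y : P) : val X =i val Y -> X = Y.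
Proof. by move=> h; apply/val_inj/fsetP. Qed.

Lemma mem_one z : (z \in val po) = (z == 1).
Proof. by rewrite /= in_fset1. Qed.

Lemma pm1 X : pm X po = X.
Proof.
apply: Peq => z; apply/idP/idP.
- by case/memM => x [y [xX [+ ->]]]; rewrite mem_one => /eqP ->; rewrite mulg1.
- by move=> zX; apply/memM; exists z, 1; rewrite mem_one eqxx mulg1.
Qed.

Lemma p1m X : pm po X = X.
Proof.
apply: Peq => z; apply/idP/idP.
- by case/memM => x [y [+ [yX ->]]]; rewrite mem_one => /eqP ->; rewrite mul1g.
- by move=> zX; apply/memM; exists 1, z; rewrite mem_one eqxx mul1g.
Qed.

Lemma one_mk : po = mk [::].
Proof. by apply: Peq => z; rewrite mem_mk mem_one inE. Qed.

Lemma sub_mulr X Y : {subset val X <= val (pm X Y)}.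
Proof. by move=> x xX; apply/memM; exists x, 1; rewrite mulg1 (valP Y). Qed.

Lemma sub_mull X Y : {subset val Y <= val (pm X Y)}.
Proof. by move=> y yY; apply/memM; exists 1, y; rewrite mul1g (valP X). Qed.

Lemma dvd_sub X Y : mdvd pm X Y -> {subset val X <= val Y}.
Proof. by case=> A [B ->] x xX; apply: sub_mulr; apply: sub_mull. Qed.

Lemma assoc_eq X Y : massoc pm X Y -> X = Y.
Proof.
case=> /dvd_sub h1 /dvd_sub h2; apply: Peq => z.
by apply/idP/idP => [/h1|/h2].
Qed.

Lemma mdvd_refl X : mdvd pm X X.
Proof. by exists po, po; rewrite pm1 p1m. Qed.

Lemma massoc_refl X : massoc pm X X.
Proof. by split; apply: mdvd_refl. Qed.

Lemma ud_one X : unit_divisor pm po X <-> X = po.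
Proof.
split.
- move/dvd_sub => h; apply: Peq => z; rewrite mem_one.
  apply/idP/idP => [/h|/eqP ->]; first by rewrite mem_one.
  exact: (valP X).
- by move=> ->; apply: mdvd_refl.
Qed.

Lemma mk_mul s t :
  pm (mk s) (mk t) = mk [seq x * y | x <- 1 :: s, y <- 1 :: t].
Proof.
apply: Peq => z; rewrite [RHS]mem_mk; apply/idP/idP.
- case/memM => x [y [xs [yt ->]]]; rewrite !mem_mk in xs yt.
  by rewrite inE; apply/orP; right; apply/allpairsP; exists (x, y).
- rewrite inE => /orP [/eqP ->|].
    exact: (valP (pm (mk s) (mk t))).
  case/allpairsP => [[x y] [xs yt ->]].
  by apply/memM; exists x, y; rewrite !mem_mk.
Qed.

Lemma mk_eq s t : all (fun x => x \in 1 :: t) s -> all (fun x => x \in 1 :: s) t ->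
  mk s = mk t.
Proof.
move=> /allP h1 /allP h2; apply: Peq => z; rewrite !mem_mk.
apply/idP/idP; rewrite inE => /orP [/eqP ->|]; rewrite ?mem_head //.
- by move/h1.
- by move/h2.
Qed.

Lemma mk_neq s t z : z \in 1 :: s -> z \notin 1 :: t -> mk s <> mk t.
Proof. by move=> h1 h2 e; move: h1; rewrite -mem_mk e mem_mk (negbTE h2). Qed.

Lemma nonone X : X <> po -> exists u, u \in val X /\ u != 1.
Proof.
move=> nX; apply: NNPP => nex; apply: nX; apply: Peq => z; rewrite mem_one.
apply/idP/idP => [zX|/eqP ->]; last exact: (valP X).
by apply: NNPP => nz; apply: nex; exists z; rewrite zX; split => //; apply/negP.
Qed.

Lemma irr_crit X : X <> po ->
  (forall U V, U <> po -> V <> po -> U <> X -> V <> X ->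
     {subset val U <= val X} -> {subset val V <= val X} -> pm U V <> X) ->
  mirreducible pm po X.
Proof.
move=> nX h; split; first by move/ud_one.
move=> U V nUd nVd [dU nU] [dV nV'] E.
apply: (h U V).
- by move=> e; apply: nUd; rewrite e; apply/ud_one.
- by move=> e; apply: nVd; rewrite e; apply/ud_one.
- by move=> e; apply: nU; rewrite e; apply: massoc_refl.
- by move=> e; apply: nV'; rewrite e; apply: massoc_refl.
- exact: dvd_sub.
- exact: dvd_sub.
- by rewrite E.
Qed.

Lemma irr2 a : a != 1 -> mirreducible pm po (mk [:: a]).
Proof.
move=> a1; apply: irr_crit.
  by rewrite one_mk; apply: (@mk_neq _ _ a); rewrite !inE ?eqxx ?orbT // (negbTE a1).
move=> U V nU _ UX _ sU _ _; apply: UX; apply: Peq => z.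
have [u [uU u1]] := nonone nU.
have := sU _ uU; rewrite mem_mk !inE (negbTE u1) /= => /eqP ua.
rewrite mem_mk !inE; apply/idP/idP.
- by move/sU; rewrite mem_mk !inE.
- by case/orP => /eqP ->; [exact: (valP U) | rewrite -ua].
Qed.

Lemma size_length (T : Type) (l : seq T) : size l = length l.
Proof. by elim: l => //= x l ->. Qed.

Lemma F2eq a c : List.Forall2 (massoc pm) a c -> a = c.
Proof. by elim=> //= x y l l' /assoc_eq -> _ ->. Qed.

Lemma In_mask (T : Type) (m : seq bool) (l : seq T) x :
  List.In x (mask m l) -> List.In x l.
Proof.
elim: l m => [|y l IH] [|[] m] //=.
- by case=> [->|/IH]; [left|right].
- by move/IH; right.
Qed.

Lemma subword_In a b : subword pm a b -> forall L, List.In L a -> List.In L b.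
Proof.
case=> b' [pb [m F]]; move: (F2eq F) => e; subst a => L H1; have {H1} := In_mask H1.
by apply: Permutation_in; apply: Permutation_sym.
Qed.

Lemma subword_size a b : subword pm a b -> size a <= size b.
Proof.
case=> b' [pb [m /F2eq ->]].
rewrite (size_length b) (Permutation_length pb) -size_length.
exact/size_subseq/mask_subseq.
Qed.

Lemma subword_full a b : subword pm b a -> size b = size a -> subword pm a b.
Proof.
case=> a' [pa [m F]]; move: (F2eq F) => e0; subst b => e.
have ss := mask_subseq m a'.
have e' : size (mask m a') = size a'.
  by rewrite e (size_length a) (Permutation_length pa) -size_length.
have := size_subseq_leqif ss; rewrite e' => -[_]; rewrite eqxx => /esym/eqP ea.
rewrite ea; exists a; split; first exact: Permutation_sym.
exists (nseq (size a) true); rewrite mask_true //.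
by elim: a {pa e ea ss e'} => //= x l IH; constructor => //; apply: massoc_refl.
Qed.

Lemma minimal_crit X a : factorization pm po X a ->
  (forall b, size b < size a -> (forall L, List.In L b -> List.In L a) ->
     wprod pm po b <> X) -> minimal_factorization pm po X a.
Proof.
move=> fa h; split=> // -[b [[_ wb] [sba nsab]]].
have := subword_size sba; rewrite leq_eqVlt => /orP [/eqP e|lt].
- exact: nsab (subword_full sba e).
- exact: (h b lt (subword_In sba) wb).
Qed.

Lemma not_equiv a b L : List.In L b -> ~ List.In L a -> ~ word_equiv pm a b.
Proof. by move=> Lb nLa [_ sba]; apply: nLa; apply: (subword_In sba). Qed.

Lemma notUmF X a b : minimal_factorization pm po X a ->
  minimal_factorization pm po X b -> ~ word_equiv pm a b -> ~ UmF pm po.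
Proof. by move=> ma mb ne [_ h]; apply: ne; apply: (h X). Qed.

End Gen.


Section Cases.
Variable H : monoidType.
Local Notation P := (Pfin1 H).
Local Notation pm := (@Pfin1_mul H).
Local Notation po := (Pfin1_one H).

Lemma fact2 (A B X : P) : mirreducible pm po A -> mirreducible pm po B ->
  pm A B = X -> factorization pm po X [:: A; B].
Proof.
move=> iA iB e; split; last by rewrite /= pm1.
by apply: List.Forall_cons => //; apply: List.Forall_cons.
Qed.

Lemma mk_neq' (s t : seq H) z : z \notin 1 :: s -> z \in 1 :: t -> mk s <> mk t.
Proof. by move=> h1 h2 /esym; apply: (mk_neq h2 h1). Qed.

Lemma wprod1 (L : P) : wprod pm po [:: L] = L.
Proof. by rewrite /= pm1. Qed.

Lemma wprod0 : wprod pm po [::] = mk [::].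
Proof. by rewrite /= one_mk. Qed.

Lemma In2 (L A B : P) : List.In L [:: A; B] -> L = A \/ L = B.
Proof. by case=> [<-|[<-|[]]]; [left|right]. Qed.

Lemma In3 (L A : P) : List.In L [:: A; A; A] -> L = A.
Proof. by case=> [<-|[<-|[<-|[]]]]. Qed.

Lemma case1a (a : H) : a * a != 1 -> a * a != a ->
  a*(a*a) \in [:: 1; a; a*a] -> ~ Pfin1_UmF H.
Proof.
move=> h1 h2 h3; rewrite !inE in h3.
have a1 : a != 1 by apply: contraNneq h1 => ->; rewrite mulg1.
set A := mk [:: a]; set A2 := mk [:: a * a]; set X := mk [:: a; a * a].
have eAA : pm A A = X.
  rewrite /A /X mk_mul /= !mul1g !mulg1; apply: mk_eq; rewrite /= !inE !eqxx ?orbT //.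
have eAA2 : pm A A2 = X.
  rewrite /A /A2 /X mk_mul /= !mul1g !mulg1; apply: mk_eq; rewrite /= !inE !eqxx ?orbT //=.
  by rewrite andbT.
have iA := irr2 a1; have iA2 := irr2 h1.
have nX0 : mk [::] <> X.
  apply: (@mk_neq' _ _ a); rewrite !inE ?eqxx ?orbT //.
have nXA : A <> X.
  apply: (@mk_neq' _ _ (a * a)); rewrite !inE ?eqxx ?orbT //.
  by rewrite negb_or h1 h2.
have nXA2 : A2 <> X.
  apply: (@mk_neq' _ _ a); rewrite !inE ?eqxx ?orbT //.
  by rewrite negb_or a1 eq_sym h2.
apply: (@notUmF _ X [:: A; A] [:: A; A2]).
- apply: minimal_crit; first exact: fact2.
  case=> [|L [|L' b]] //= _; first by rewrite one_mk.
  by move=> /(_ L (or_introl erefl)) /In2 [] ->; rewrite pm1.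
- apply: minimal_crit; first exact: fact2.
  case=> [|L [|L' b]] //= _; first by rewrite one_mk.
  by move=> /(_ L (or_introl erefl)) /In2 [] ->; rewrite pm1.
- apply: (@not_equiv _ _ _ A2); first by right; left.
  case=> [e|[e|[]]]; move: e; apply: (@mk_neq _ _ _ a); rewrite !inE ?eqxx ?orbT //.
  all: by rewrite negb_or a1 eq_sym h2.
Qed.

Lemma case1b (a : H) : a * a != 1 -> a * a != a ->
  a*(a*a) \notin [:: 1; a; a*a] -> ~ Pfin1_UmF H.
Proof.
move=> h1 h2 h3; rewrite !inE !negb_or in h3; case/and3P: h3 => h31 h32 h33.
have a1 : a != 1 by apply: contraNneq h1 => ->; rewrite mulg1.
set A := mk [:: a]; set A2 := mk [:: a * a]; set Y := mk [:: a; a * a].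
set X := mk [:: a; a * a; a * (a * a)].
have eAA : pm A A = Y.
  rewrite /A /Y mk_mul /= !mul1g !mulg1; apply: mk_eq; rewrite /= !inE !eqxx ?orbT //.
have eAAA : pm A Y = X.
  rewrite /A /Y /X mk_mul /= !mul1g !mulg1; apply: mk_eq; rewrite /= !inE !eqxx ?orbT //.
have eAA2 : pm A A2 = X.
  rewrite /A /A2 /X mk_mul /= !mul1g !mulg1; apply: mk_eq; rewrite /= !inE !eqxx ?orbT //=.
have iA := irr2 a1; have iA2 := irr2 h1.
have nX0 : mk [::] <> X.
  by apply: (@mk_neq' _ _ a); rewrite !inE ?eqxx ?orbT.
have nXA : A <> X.
  apply: (@mk_neq' _ _ (a * a)); rewrite !inE ?eqxx ?orbT //.
  by rewrite negb_or h1 h2.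
have nXY : Y <> X.
  apply: (@mk_neq' _ _ (a * (a * a))); rewrite !inE ?eqxx ?orbT //.
  by rewrite !negb_or h31 h32 h33.
have nXA2 : A2 <> X.
  apply: (@mk_neq' _ _ a); rewrite !inE ?eqxx ?orbT //.
  by rewrite negb_or a1 eq_sym h2.
apply: (@notUmF _ X [:: A; A; A] [:: A; A2]).
- apply: minimal_crit.
    split; last by rewrite /= pm1 eAA eAAA.
    by do 2 apply: List.Forall_cons => //; apply: List.Forall_cons.
  case=> [|L [|L' [|L'' b]]] //= _; first by rewrite one_mk.
    by move=> /(_ L (or_introl erefl)) /In3 ->; rewrite pm1.
  move=> h; rewrite pm1 (In3 (h L (or_introl erefl))).
  by rewrite (In3 (h L' (or_intror (or_introl erefl)))) eAA.
- apply: minimal_crit; first exact: fact2.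
  case=> [|L [|L' b]] //= _; first by rewrite one_mk.
  by move=> /(_ L (or_introl erefl)) /In2 [] ->; rewrite pm1.
- apply: (@not_equiv _ _ _ A2); first by right; left.
  case=> [e|[e|[e|[]]]]; move: e; apply: (@mk_neq _ _ _ a); rewrite !inE ?eqxx ?orbT //.
  all: by rewrite negb_or a1 eq_sym h2.
Qed.

Lemma case2a (a b : H) : a * a = 1 -> a != 1 -> b != 1 -> b != a -> is_unit b ->
  ~ Pfin1_UmF H.
Proof.
move=> haa a1 b1 ba [bi [bb1 bb2]].
have eab : a * (a * b) = b by rewrite mulgA haa mul1g.
have ab1 : a * b != 1.
  by apply: contraNneq ba => e; rewrite -eab e mulg1.
have aba : a * b != a.
  by apply: contraNneq b1 => e; rewrite -eab e haa.
have abb : a * b != b.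
  apply: contraNneq a1 => e.
  by rewrite -(mulg1 a) -bb1 mulgA e.
set A := mk [:: a]; set B := mk [:: b]; set C := mk [:: a * b].
set X := mk [:: a; b; a * b].
have eAB : pm A B = X.
  rewrite /A /B /X mk_mul /= !mul1g !mulg1; apply: mk_eq; rewrite /= !inE !eqxx ?orbT //.
have eAC : pm A C = X.
  rewrite /A /C /X mk_mul /= !mul1g !mulg1 eab; apply: mk_eq; rewrite /= !inE !eqxx ?orbT //.
have iA := irr2 a1; have iB := irr2 b1; have iC := irr2 ab1.
have nX0 : mk [::] <> X.
  by apply: (@mk_neq' _ _ a); rewrite !inE ?eqxx ?orbT.
have nXA : A <> X.
  apply: (@mk_neq' _ _ b); rewrite !inE ?eqxx ?orbT //.
  by rewrite negb_or b1 ba.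
have nXB : B <> X.
  apply: (@mk_neq' _ _ a); rewrite !inE ?eqxx ?orbT //.
  by rewrite negb_or a1 eq_sym ba.
have nXC : C <> X.
  apply: (@mk_neq' _ _ a); rewrite !inE ?eqxx ?orbT //.
  by rewrite negb_or a1 eq_sym aba.
apply: (@notUmF _ X [:: A; C] [:: A; B]).
- apply: minimal_crit; first exact: fact2.
  case=> [|L [|L' b']] //= _; first by rewrite one_mk.
  by move=> /(_ L (or_introl erefl)) /In2 [] ->; rewrite pm1.
- apply: minimal_crit; first exact: fact2.
  case=> [|L [|L' b']] //= _; first by rewrite one_mk.
  by move=> /(_ L (or_introl erefl)) /In2 [] ->; rewrite pm1.
- apply: (@not_equiv _ _ _ B); first by right; left.
  case=> [e|[e|[]]]; move: e; apply: (@mk_neq' _ _ b); rewrite !inE ?eqxx ?orbT //.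
  - by rewrite negb_or b1 ba.
  - by rewrite negb_or b1 eq_sym abb.
Qed.

Lemma case2b (x y : H) : x * x = x -> y * y = y -> x != 1 -> y != 1 -> x != y ->
  x * y \notin [:: 1; x; y] -> y * x \notin [:: 1; x; y] -> ~ Pfin1_UmF H.
Proof.
move=> hxx hyy x1 y1 xy hxy hyx.
set A := mk [:: x]; set B := mk [:: y]; set C := mk [:: x; y].
set Z := mk [:: x; y; y * x].
have eCA : pm C A = Z.
  rewrite /A /C /Z mk_mul /= !mul1g !mulg1 hxx; apply: mk_eq; rewrite /= !inE !eqxx ?orbT //.
have eBA : pm B A = Z.
  rewrite /A /B /Z mk_mul /= !mul1g !mulg1; apply: mk_eq; rewrite /= !inE !eqxx ?orbT //.
have iA := irr2 x1; have iB := irr2 y1.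
have iC : mirreducible pm po C.
  apply: irr_crit.
    by rewrite one_mk; apply: (@mk_neq _ _ _ x); rewrite !inE ?eqxx ?orbT.
  move=> U V nU nV _ _ sU sV E.
  have inC z : z \in val C -> z != 1 -> z = x \/ z = y.
    by rewrite mem_mk !inE => /orP [->//|/orP [/eqP->|/eqP->]]; [left|right].
  have inUV u v : u \in val U -> v \in val V -> u * v \in val C.
    by move=> uU vV; rewrite -E; apply/memM; exists u, v.
  have claim u v : u \in val U -> v \in val V -> u != 1 -> v != 1 -> u = v.
    move=> uU vV u1 v1; have := inUV _ _ uU vV.
    case: (inC _ (sU _ uU) u1) => ->; case: (inC _ (sV _ vV) v1) => -> //.
      by move=> h; move: hxy; rewrite -mem_mk h.
    by move=> h; move: hyx; rewrite -mem_mk h.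
  have [u [uU u1]] := nonone nU.
  have [v [vV v1]] := nonone nV.
  have uv := claim _ _ uU vV u1 v1; subst v.
  have key w : u * u = u -> w \in val C -> w != 1 -> w != u -> False.
    move=> huu wC w1 wu; move: wC; rewrite -E => /memM [u' [v' [u'U [v'V ew]]]].
    have hu' : u' = 1 \/ u' = u.
      case: (eqVneq u' 1) => [->|u'1]; [by left | right].
      exact: claim u'U vV u'1 v1.
    have hv' : v' = 1 \/ v' = u.
      case: (eqVneq v' 1) => [->|v'1]; [by left | right].
      by apply/esym; apply: claim uU v'V u1 v'1.
    move: ew; case: hu' => ->; case: hv' => ->; rewrite ?mul1g ?mulg1 ?huu => ew.
    - by move: w1; rewrite ew eqxx.
    - by move: wu; rewrite ew eqxx.
    - by move: wu; rewrite ew eqxx.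
    - by move: wu; rewrite ew eqxx.
  case: (inC _ (sU _ uU) u1) => eu; subst u.
  - by apply: (key y) => //; rewrite ?mem_mk ?inE ?eqxx ?orbT // eq_sym.
  - by apply: (key x) => //; rewrite ?mem_mk ?inE ?eqxx ?orbT //.
have nX0 : mk [::] <> Z.
  by apply: (@mk_neq' _ _ x); rewrite !inE ?eqxx ?orbT.
have nZA : A <> Z.
  apply: (@mk_neq' _ _ y); rewrite !inE ?eqxx ?orbT //.
  by rewrite negb_or y1 eq_sym xy.
have nZB : B <> Z.
  apply: (@mk_neq' _ _ x); rewrite !inE ?eqxx ?orbT //.
  by rewrite negb_or x1 xy.
have nZC : C <> Z.
  apply: (@mk_neq' _ _ (y * x)); rewrite ?inE ?eqxx ?orbT //.
  by move: hyx; rewrite !inE.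
apply: (@notUmF _ Z [:: B; A] [:: C; A]).
- apply: minimal_crit; first exact: fact2.
  case=> [|L [|L' b']] //= _; first by rewrite one_mk.
  by move=> /(_ L (or_introl erefl)) /In2 [] ->; rewrite pm1.
- apply: minimal_crit; first exact: fact2.
  case=> [|L [|L' b']] //= _; first by rewrite one_mk.
  by move=> /(_ L (or_introl erefl)) /In2 [] ->; rewrite pm1.
- apply: (@not_equiv _ _ _ C); first by left.
  case=> [e|[e|[]]]; move: e.
  + by apply: (@mk_neq' _ _ x); rewrite !inE ?eqxx ?orbT // negb_or x1 xy.
  + by apply: (@mk_neq' _ _ y); rewrite !inE ?eqxx ?orbT // negb_or y1 eq_sym xy.
Qed.
End Cases.


Section Cover.
Variable H : monoidType.
Local Notation P := (Pfin1 H).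
Local Notation pm := (@Pfin1_mul H).
Local Notation po := (Pfin1_one H).

Lemma subword_refl a : subword pm a a.
Proof.
exists a; split; first exact: Permutation_refl.
exists (nseq (size a) true); rewrite mask_true //.
by elim: a => //= x l IH; constructor => //; apply: massoc_refl.
Qed.

Lemma cover_UmF (a : H) : (forall h : H, h = 1 \/ h = a) -> Pfin1_UmF H.
Proof.
move=> cov.
set T := mk [:: a].
have allX (X : P) : X = po \/ X = T.
  case: (boolP (a \in val X)) => aX; [right|left]; apply: Peq => z.
  - rewrite mem_mk !inE; apply/idP/idP => [_|]; first by case: (cov z) => ->; rewrite eqxx ?orbT.
    by case/orP => /eqP ->; [exact: (valP X)|].
  - rewrite mem_one; apply/idP/idP => [|/eqP ->]; last exact: (valP X).
    by case: (cov z) => [->|->]; rewrite ?eqxx // (negbTE aX).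
have TT : pm T T = T.
  case: (allX (pm T T)) => // e.
  have : unit_divisor pm po T by exists po, T; rewrite p1m e.
  by move/ud_one => eT; rewrite eT pm1.
have irrT L : mirreducible pm po L -> L = T /\ T <> po.
  case=> nud _; case: (allX L) => eL.
    by exfalso; apply: nud; rewrite eL; apply/ud_one.
  by split => // eT; apply: nud; rewrite eL eT; apply/ud_one.
have wT l : wprod pm po (T :: l) = T.
  by change (pm T (wprod pm po l) = T); case: (allX (wprod pm po l)) => ->; rewrite ?pm1 ?TT.
have shape X w : minimal_factorization pm po X w ->
    (w = [::] /\ X = po) \/ (w = [:: T] /\ X = T /\ T <> po).
  case=> [[fw ew] mw].
  have allT L : List.In L w -> L = T /\ T <> po.
    by move=> Lw; apply: irrT; move/List.Forall_forall: fw; apply.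
  case: w fw ew mw allT => [|L [|L' w]] fw ew mw allT.
  - by left; split.
  - have [eL nT] := allT L (or_introl erefl); subst L.
    by right; split; [done | split; [rewrite -ew /= pm1 | exact: nT]].
  - exfalso; apply: mw; exists [:: T].
    have [eL nT] := allT L (or_introl erefl).
    split; first split.
    + apply: List.Forall_cons => //.
      by move/List.Forall_forall: fw; apply; rewrite -eL; left.
    + by rewrite -ew eL !wT.
    + split.
      * exists [:: L, L' & w]; split; first exact: Permutation_refl.
        by exists [:: true]; rewrite /= eL; constructor => //; apply: massoc_refl.
      * by move/subword_size.
have irrT' : T <> po -> mirreducible pm po T.
  move=> nT; split; first by move/ud_one.
  move=> U V nU _ [_ nUT] _ _; apply: nUT.
  case: (allX U) => eU; first by exfalso; apply: nU; rewrite eU; apply/ud_one.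
  by rewrite eU; apply: massoc_refl.
split.
- move=> X nX.
  have [eX nT] : X = T /\ T <> po.
    case: (allX X) => eX; first by exfalso; apply: nX; rewrite eX; apply/ud_one.
    by split => // eT; apply: nX; rewrite eX eT; apply/ud_one.
  exists [:: T]; split; last by rewrite wT.
  by apply: List.Forall_cons => //; apply: irrT'.
- move=> X w1 w2 m1 m2.
  case: (shape _ _ m1) => [[-> e1]|[-> [e1 nT]]];
  case: (shape _ _ m2) => [[-> e2]|[-> [e2 nT']]];
    try by split; apply: subword_refl.
  + by exfalso; apply: nT'; rewrite -e2.
  + by exfalso; apply: nT; rewrite -e1.
Qed.
End Cover.

Lemma Z2_cases (z : 'Z_2) : z = 0%R \/ z = 1%R.
Proof. by case: z => [[|[|m]] hm] //; [left|right]; apply/val_inj. Qed.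

Lemma iso_cover (H : monoidType) : iso_Z2 H -> exists a : H, forall h : H, h = 1 \/ h = a.
Proof.
case=> f [[g fg gf] [f1 fM]]; exists (g 1%R) => h.
case: (Z2_cases (f h)) => e; [left|right].
- by rewrite -(fg h) -(fg 1) e f1.
- by rewrite -(fg h) e.
Qed.

Lemma cover_iso (H : monoidType) (a : H) : a != 1 -> a * a = 1 ->
  (forall h : H, h = 1 \/ h = a) -> iso_Z2 H.
Proof.
move=> a1 haa cov.
exists (fun h => if h == 1 then 0%R else 1%R); split; [|split].
- exists (fun z : 'Z_2 => if z == 0%R then 1 else a).
  + by move=> h; case: (cov h) => ->; rewrite ?eqxx // (negbTE a1).
  + move=> z; case: (Z2_cases z) => ->; rewrite ?eqxx //.
    by rewrite (negbTE a1).
- by rewrite eqxx.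
- move=> x y; case: (cov x) => ->; case: (cov y) => ->;
    rewrite ?mul1g ?mulg1 ?haa ?eqxx ?(negbTE a1) //.
all: rewrite ?add0r ?addr0 //.
all: by apply: val_inj.
Qed.

Lemma unit1 (H : monoidType) : is_unit (1 : H).
Proof. by exists 1; rewrite mulg1. Qed.

Unset Implicit Arguments.

Theorem corollary3p7 (H : monoidType) :
  is_group H \/ ~ nonunits_almost_breakable_semigroup H ->
  (Pfin1_UmF H <-> trivial_monoid H \/ iso_Z2 H).
Proof.
move=> hyp; split; last first.
  case=> [triv|iso].
    by apply: (@cover_UmF _ 1) => h; left; apply: triv.
  by have [a cov] := iso_cover iso; apply: (cover_UmF cov).
move=> U.
have sq (a : H) : a * a = 1 \/ a * a = a.
  apply: NNPP => n.
  have h1 : a * a != 1 by apply/eqP => e; apply: n; left.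
  have h2 : a * a != a by apply/eqP => e; apply: n; right.
  case: (boolP (a * (a * a) \in [:: 1; a; a * a])) => h3.
  - exact: (case1a h1 h2 h3 U).
  - exact: (case1b h1 h2 h3 U).
case: hyp => [grp|nab]; last first.
  exfalso; apply: nab; split.
  - move=> x y nx ny [v [h1 h2]]; apply: nx.
    case: (sq x) => hx; first by exists x; rewrite hx.
    suff -> : x = 1 by apply: unit1.
    have e : x * (x * y * v) = x * y * v by rewrite !mulgA hx.
    by rewrite h1 mulg1 in e.
  - move=> x y nx ny; apply: NNPP => hn.
    have hx : x * x = x.
      by case: (sq x) => // hx; exfalso; apply: nx; exists x; rewrite hx.
    have hy : y * y = y.
      by case: (sq y) => // hy; exfalso; apply: ny; exists y; rewrite hy.
    have x1 : x != 1 by apply/eqP => e; apply: nx; rewrite e; apply: unit1.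
    have y1 : y != 1 by apply/eqP => e; apply: ny; rewrite e; apply: unit1.
    apply: (case2b hx hy x1 y1 _ _ _ U).
    + by apply/eqP => e; apply: hn; left; left; rewrite e hy.
    + rewrite !inE !negb_or; apply/and3P; split; apply/eqP => e.
      * have e' : x * (x * y) = x * y by rewrite mulgA hx.
        by move: e'; rewrite e mulg1 => e'; move: x1; rewrite e' eqxx.
      * by apply: hn; left; left.
      * by apply: hn; left; right.
    + rewrite !inE !negb_or; apply/and3P; split; apply/eqP => e.
      * have e' : y * (y * x) = y * x by rewrite mulgA hy.
        by move: e'; rewrite e mulg1 => e'; move: y1; rewrite e' eqxx.
      * by apply: hn; right; left.
      * by apply: hn; right; right.
case: (classic (trivial_monoid H)) => [t|nt]; first by left.
right.
have [a a1] : exists a : H, a != 1.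
  apply: NNPP => ne; apply: nt => h; apply: NNPP => nh; apply: ne.
  by exists h; apply/eqP.
have haa : a * a = 1.
  case: (sq a) => // e; exfalso.
  have [ai [h1 _]] := grp a.
  have e' : a * (a * ai) = a * ai by rewrite mulgA e.
  by move: e'; rewrite h1 mulg1 => e'; move: a1; rewrite e' eqxx.
case: (classic (exists b : H, b != 1 /\ b != a)) => [[b [b1 ba]]|nb].
  by exfalso; exact: (case2a haa a1 b1 ba (grp b) U).
apply: (cover_iso a1 haa) => h.
case: (eqVneq h 1) => [->|h1]; [by left|right].
case: (eqVneq h a) => // ha; exfalso; apply: nb; exists h; split => //.
Qed.
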